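(* There exists a two-way optical interference automaton (2OIA) that recognizes the language $L_{centre}=\{w_1 a w_2 \mid w_1,w_2\in\{a,b\}^*,\ |w_1|=|w_2|\}$ in time linear in the length of the input string.
   Context: A two-way optical interference automaton (2OIA) is a deterministic machine with finite state set $Q$, start state $q_0$, accepting and rejecting states, finite input alphabet $\Sigma$, and tape alphabet $\Gamma=\Sigma\cup\{\text{¢},\$\}$. On input $w=w_1\cdots w_n$ the read-only tape holds ¢$w_1\cdots w_n\$$ in cells $0,1,\dots,n+1$, scanned by a two-way head. For each cell $m$ there is a monochromatic point light source at the point $(m,0)$ of the plane; all sources have the same wavelength $\lambda$ and the same initial amplitude $A_0$, and each source is at any moment either switched off or switched on with initial phase $0$ or $\pi$. A detector is located at a grid point $(j,k)$ with $j,k\in\{0,\tfrac12,1,\tfrac32,\dots,n+1\}$, pointing towards the source array; its field of vision is the cone making angle $\pi/4$ with the vertical line through it, so it sees exactly the sources at $(m,0)$ with $|m-j|\le k$. The resultant wave at the detector is $\sum A_0 r_m^{-1}e^{i(\phi_m+2\pi r_m/\lambda)}$, summed over the switched-on sources it sees, where $r_m$ is the distance from the source to the detector and $\phi_m\in\{0,\pi\}$ the source's phase; the detector outputs $\underline{1}$ if this resultant (equivalently the intensity) is nonzero and $\underline{0}$ otherwise. The transition function $\delta:Q\times\Gamma\times\{\underline0,\underline1\}\to Q\times\{\text{left},\text{right},\text{stay}\}\times\{\text{left},\text{right},\text{up},\text{down},\text{stay}\}\times\{\mathrm{toggle}(0),\mathrm{toggle}(\pi),-\}$ maps (state, scanned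 symbol, detector output) to a new state, a move of the head by one cell, a move of the detector by one grid step (of length $1/2$), and an action on the source of the currently scanned cell: $\mathrm{toggle}(\phi)$ switches it on with phase $\phi$ if it is off and switches it off if it is on; $-$ does nothing. Initially all sources are off, the machine is in $q_0$, the head is on cell $0$, and the detector is at a prescribed initial grid position. For a given source, a maximal sequence of toggles at consecutive time steps is called non-transient if its length is odd; there is a constant $k$ such that the machine crashes if it attempts a non-transient toggle sequence on a single source for the $(k+1)$-th time. The machine accepts when it is in an accepting state with detector output $\underline0$. Its running time is the total number of moves made by the head plus the number of moves made by the detector. A 2OIA recognizes a language $L$ if it accepts every input in $L$ and rejects every input not in $L$. *)

(* Defs.v *)
From Stdlib Require Import Reals List Arith Bool.
Import ListNotations.

Inductive tsym (S : Type) : Type :=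
| LEnd : tsym S
| REnd : tsym S
| Sym  : S -> tsym S.
Arguments LEnd {S}. Arguments REnd {S}. Arguments Sym {S} _.

Inductive hmove := HLeft | HRight | HStay.
Inductive dmove := DLeft | DRight | DUp | DDown | DStay.
Inductive tact := Tog0 | TogPi | NoAct.

(** A 2OIA over input alphabet S.  The detector output is a bool
    (false = 0, true = 1).  Detector positions are stored in half-units:
    (dj, dk) denotes the grid point (dj/2, dk/2). *)
Record OIA (S : Type) : Type := {
  st : Type;
  st_finite : exists l : list st, forall q, In q l;
  q0 : st;
  accepting : st -> bool;
  rejecting : st -> bool;
  acc_rej_disj : forall q, accepting q = true -> rejecting q = false;
  delta : st -> tsym S -> bool -> st * hmove * dmove * tact;
  det_init : nat * nat;
  kbound : nat                (* the constant k of the non-transient toggle rule *)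
}.
Arguments st {S} _. Arguments q0 {S} _. Arguments accepting {S} _.
Arguments rejecting {S} _. Arguments delta {S} _. Arguments det_init {S} _.
Arguments kbound {S} _.

(** Configurations.  [src m] : None = off, Some false = on with phase 0,
    Some true = on with phase pi.  [cnt m] = number of completed
    non-transient toggle sequences on source m.  [run] = the source whose
    toggle sequence is currently in progress (toggled at the previous step),
    together with the parity of its length (true = odd).
    [tm] = running time so far (head moves + detector moves). *)
Record cfg (Q : Type) : Type := mkcfg {
  cq : Q; hp : nat; dj : nat; dk : nat;
  src : nat -> option bool;
  cnt : nat -> nat;
  run : option (nat * bool);
  tm : nat
}.
Arguments mkcfg {Q} _ _ _ _ _ _ _ _.
Arguments cq {Q} _. Arguments hp {Q} _. Arguments dj {Q} _. Arguments dk {Q} _.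
Arguments src {Q} _. Arguments cnt {Q} _. Arguments run {Q} _. Arguments tm {Q} _.

Definition init_cfg {S} (M : OIA S) : cfg (st M) :=
  mkcfg (q0 M) 0 (fst (det_init M)) (snd (det_init M))
        (fun _ => None) (fun _ => 0) None 0.

Definition tape_at {S} (w : list S) (h : nat) : tsym S :=
  match h with
  | 0 => LEnd
  | S h' => match nth_error w h' with Some s => Sym s | None => REnd end
  end.

Open Scope R_scope.

Definition Rsum_list (l : list R) : R := fold_right Rplus 0 l.

(** Detector at half-unit position (j2,k2) sees source m iff |m - j| <= k. *)
Definition sees (j2 k2 m : nat) : bool :=
  ((2 * m <=? j2 + k2) && (j2 <=? 2 * m + k2))%nat.

(** distance from source (m,0) to detector (j2/2, k2/2) *)
Definition dist (j2 k2 m : nat) : R :=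
  sqrt ((INR m - INR j2 / 2) ^ 2 + (INR k2 / 2) ^ 2).

Definition phase (b : bool) : R := if b then PI else 0.

(** Real and imaginary parts of the resultant wave
    sum A0 r_m^{-1} e^{i(phi_m + 2 pi r_m / lambda)} over switched-on seen
    sources m in 0 .. n+1. *)
Definition resultant_part (trig : R -> R) (lam A0 : R) (n j2 k2 : nat)
    (s : nat -> option bool) : R :=
  Rsum_list (map (fun m =>
     match s m with
     | Some ph => if sees j2 k2 m
                  then A0 / dist j2 k2 m * trig (phase ph + 2 * PI * dist j2 k2 m / lam)
                  else 0
     | None => 0
     end) (seq 0 (n + 2))).

(** Some switched-on seen source sits exactly at the detector (r = 0):
    the resultant is then infinite, hence nonzero. *)
Definition source_at_detector (n j2 k2 : nat) (s : nat -> option bool) : bool :=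
  existsb (fun m => match s m with
                    | Some _ => ((k2 =? 0) && (j2 =? 2 * m))%nat
                    | None => false end) (seq 0 (n + 2)).

Definition detector_output (lam A0 : R) (n j2 k2 : nat) (s : nat -> option bool) : bool :=
  if source_at_detector n j2 k2 s then true else
  if Req_EM_T (resultant_part cos lam A0 n j2 k2 s) 0 then
    if Req_EM_T (resultant_part sin lam A0 n j2 k2 s) 0 then false else true
  else true.

Close Scope R_scope.

Definition output_of {S} (M : OIA S) (lam A0 : R) (w : list S) (c : cfg (st M)) : bool :=
  detector_output lam A0 (length w) (dj c) (dk c) (src c).

(** Closing a toggle run: an odd-length (non-transient) maximal run increases
    the counter of its source; exceeding k is a crash (None). *)
Definition close_run (k : nat) (r : option (nat * bool)) (cn : nat -> nat)
    : option (nat -> nat) :=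
  match r with
  | Some (m, true) =>
      if (k <? S (cn m))%nat then None
      else Some (fun x => if Nat.eqb x m then S (cn m) else cn x)
  | _ => Some cn
  end.

Inductive res (Q : Type) : Type :=
| Cont : cfg Q -> res Q
| Stop : bool -> nat -> res Q.    (* verdict (true = accept), running time *)
Arguments Cont {Q} _. Arguments Stop {Q} _ _.

Definition move_head (n h : nat) (m : hmove) : option nat :=
  match m with
  | HLeft => match h with 0 => None | S h' => Some h' end
  | HRight => if (h <? n + 1)%nat then Some (S h) else None
  | HStay => Some h
  end.

Definition move_det (n j2 k2 : nat) (m : dmove) : option (nat * nat) :=
  match m with
  | DLeft => match j2 with 0 => None | S j' => Some (j', k2) end
  | DRight => if (j2 <? 2 * (n + 1))%nat then Some (S j2, k2) else None
  | DUp => if (k2 <? 2 * (n + 1))%nat then Some (j2, S k2) else None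
  | DDown => match k2 with 0 => None | S k' => Some (j2, k') end
  | DStay => Some (j2, k2)
  end.

Definition hcost (m : hmove) : nat := match m with HStay => 0 | _ => 1 end.
Definition dcost (m : dmove) : nat := match m with DStay => 0 | _ => 1 end.

(** In a halting (accepting/rejecting) state the machine stops:
    any toggle run still in progress is closed (possibly crashing), and it
    accepts iff the state is accepting and the detector output is 0.
    Crashes (illegal moves, (k+1)-th non-transient toggle sequence) reject. *)
Definition step {S} (M : OIA S) (lam A0 : R) (w : list S) (c : cfg (st M))
    : res (st M) :=
  let n := length w in
  if accepting M (cq c) || rejecting M (cq c) then
    match close_run (kbound M) (run c) (cnt c) with
    | None => Stop false (tm c)
    | Some _ => Stop (accepting M (cq c) && negb (output_of M lam A0 w c)) (tm c)
    end
  else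
  let '(q', hm, dmv, ta) := delta M (cq c) (tape_at w (hp c)) (output_of M lam A0 w c) in
  match move_head n (hp c) hm, move_det n (dj c) (dk c) dmv with
  | Some h', Some (j', k') =>
      let t' := (tm c + hcost hm + dcost dmv)%nat in
      match ta with
      | NoAct =>
          match close_run (kbound M) (run c) (cnt c) with
          | None => Stop false t'
          | Some cn' => Cont (mkcfg q' h' j' k' (src c) cn' None t')
          end
      | Tog0 | TogPi =>
          let h := hp c in
          let s' := fun x => if Nat.eqb x h then
                      match src c h with
                      | None => Some (match ta with TogPi => true | _ => false end)
                      | Some _ => None
                      end else src c x in
          match run c with
          | Some (m, p) =>
              if Nat.eqb m h then Cont (mkcfg q' h' j' k' s' (cnt c) (Some (h, negb p)) t')
              else match close_run (kbound M) (run c) (cnt c) with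
                   | None => Stop false t'
                   | Some cn' => Cont (mkcfg q' h' j' k' s' cn' (Some (h, true)) t')
                   end
          | None => Cont (mkcfg q' h' j' k' s' (cnt c) (Some (h, true)) t')
          end
      end
  | _, _ => Stop false (tm c + hcost hm + dcost dmv)
  end.

Fixpoint exec {S} (M : OIA S) (lam A0 : R) (w : list S) (fuel : nat) (c : cfg (st M))
    : res (st M) :=
  match fuel with
  | 0 => Cont c
  | S f => match step M lam A0 w c with
           | Cont c' => exec M lam A0 w f c'
           | r => r
           end
  end.

Definition recognizes_in_linear_time {S} (M : OIA S) (lam A0 : R)
    (L : list S -> Prop) : Prop :=
  exists C : nat, forall w : list S,
    exists (fuel : nat) (b : bool) (t : nat),
      exec M lam A0 w fuel (init_cfg M) = Stop b t /\
      (b = true <-> L w) /\ (t <= C * (length w + 1))%nat.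

Inductive ab := a | b.

Definition L_centre (w : list ab) : Prop :=
  exists w1 w2 : list ab, w = w1 ++ a :: w2 /\ length w1 = length w2.

(* Main.v *)
Require Import Defs.
From Stdlib Require Import Reals Lra Lia List Arith Bool.
Import ListNotations.

Inductive mst := Init | Init2 | P1 | P2a | P2b | Acc | Rej.

Definition mdelta (q : mst) (s : tsym ab) (o : bool) : mst * hmove * dmove * tact :=
 match q with
 | Init => (Init2, HStay, DStay, Tog0)
 | Init2 => (P1, HRight, DRight, NoAct)
 | P1 => match s with REnd => (P2a, HStay, DStay, NoAct) | _ => (P1, HRight, DRight, NoAct) end
 | P2a => if o then match s with Sym a => (Acc, HStay, DRight, NoAct)
                                | _ => (Rej, HStay, DStay, NoAct) end
          else (P2b, HLeft, DLeft, NoAct)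
 | P2b => if o then (Rej, HStay, DStay, NoAct) else (P2a, HStay, DLeft, NoAct)
 | Acc => (Acc, HStay, DStay, NoAct)
 | Rej => (Rej, HStay, DStay, NoAct)
 end.

Definition macc (q : mst) := match q with Acc => true | _ => false end.
Definition mrej (q : mst) := match q with Rej => true | _ => false end.

Lemma mfin : exists l : list mst, forall q, In q l.
Proof. exists [Init; Init2; P1; P2a; P2b; Acc; Rej]; destruct q; simpl; tauto. Qed.

Lemma mdisj : forall q, macc q = true -> mrej q = false.
Proof. destruct q; simpl; congruence. Qed.

Definition M : OIA ab := {|
  st := mst; st_finite := mfin; q0 := Init; accepting := macc; rejecting := mrej;
  acc_rej_disj := mdisj; delta := mdelta; det_init := (0%nat, 0%nat); kbound := 1%nat |}.

Definition src1 : nat -> option bool := fun x => if Nat.eqb x 0 then Some false else None.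
Definition cn1 : nat -> nat := fun x => if Nat.eqb x 0 then 1%nat else 0%nat.

Lemma rsum_zero : forall l : list nat, forall f : nat -> R, (forall m, In m l -> f m = 0%R) ->
  Rsum_list (map f l) = 0%R.
Proof.
  induction l; intros f H; simpl; auto.
  rewrite H by (simpl; auto). rewrite IHl; [lra|]. intros; apply H; simpl; auto.
Qed.

Lemma existsb_false : forall (g : nat -> bool) l, (forall m, In m l -> g m = false) -> existsb g l = false.
Proof. induction l; intros H; simpl; auto. rewrite H by (simpl; auto). apply IHl; intros; apply H; simpl; auto. Qed.

Lemma out_lemma : forall lam A0 w q h j cn r t,
  output_of M lam A0 w (mkcfg q h j 0 src1 cn r t) = Nat.eqb j 0.
Proof.
  intros. unfold output_of, detector_output. simpl dj; simpl dk; simpl src.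
  assert (Hs : source_at_detector (length w) j 0 src1 = Nat.eqb j 0).
  { unfold source_at_detector. replace (length w + 2)%nat with (S (S (length w))) by lia.
    rewrite <- cons_seq. simpl existsb. unfold src1 at 1. simpl.
    rewrite existsb_false. { rewrite orb_false_r. destruct j; reflexivity. }
    intros m Hm. apply in_seq in Hm. unfold src1.
    destruct (Nat.eqb_spec m 0); [lia|reflexivity]. }
  rewrite Hs. destruct (Nat.eqb_spec j 0); [reflexivity|].
  assert (Hz : forall tr, resultant_part tr lam A0 (length w) j 0 src1 = 0%R).
  { intros. unfold resultant_part. apply rsum_zero. intros m _. unfold src1.
    destruct (Nat.eqb_spec m 0); [|reflexivity]. subst m.
    unfold sees. destruct (Nat.leb_spec (2*0) (j+0)); destruct (Nat.leb_spec j (2*0+0)); simpl; try reflexivity; lia. }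
  rewrite !Hz. destruct (Req_EM_T 0 0); [reflexivity|congruence].
Qed.

Section Run.
Variables (lam A0 : R) (w : list ab).
Notation n := (length w).

Lemma exec_cont : forall f c c', step M lam A0 w c = Cont c' ->
  exec M lam A0 w (S f) c = exec M lam A0 w f c'.
Proof. intros f c c' H. simpl. now rewrite H. Qed.

Lemma exec_stop : forall f c b t, step M lam A0 w c = Stop b t ->
  exec M lam A0 w (S f) c = Stop b t.
Proof. intros f c b t H. simpl. now rewrite H. Qed.

Lemma tape_mid : forall h, (1 <= h <= n)%nat -> exists s, tape_at w h = Sym s.
Proof.
  intros [|h] Hh; [lia|]. simpl. destruct (nth_error w h) eqn:E; eauto.
  apply nth_error_None in E; lia.
Qed.

Lemma tape_end : tape_at w (S n) = REnd.
Proof. simpl. destruct (nth_error w n) eqn:E; auto. assert (nth_error w n <> None) by congruence; apply nth_error_Some in H; lia. Qed.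

Opaque output_of tape_at.

Lemma phase1 : forall k h t f, (h + k = S n)%nat -> (1 <= h)%nat ->
  exec M lam A0 w (S k + f) (mkcfg P1 h h 0 src1 cn1 None t)
  = exec M lam A0 w f (mkcfg P2a (S n) (S n) 0 src1 cn1 None (t + 2 * k)).
Proof.
  induction k; intros h t f Hk H1.
  - replace h with (S n) by lia. simpl plus. apply exec_cont.
    unfold step. simpl cq. simpl.

    rewrite tape_end. simpl. f_equal. f_equal; lia.
  - destruct (tape_mid h) as [s Hs]; [lia|].
    simpl plus. rewrite exec_cont with (c' := mkcfg P1 (S h) (S h) 0 src1 cn1 None (t + 2)).
    + change (S (k + f)) with (S k + f)%nat. rewrite IHk by lia.
      replace (t + 2 + 2*k)%nat with (t + 2 * S k)%nat by lia; reflexivity.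
    + unfold step. simpl. rewrite Hs. simpl.
      rewrite (proj2 (Nat.ltb_lt h (n+1))) by lia.
      rewrite (proj2 (Nat.ltb_lt h _)) by lia.
      f_equal. f_equal. lia.
Qed.

Ltac stp := unfold step; simpl; rewrite ?out_lemma; simpl.

Ltac rej t h E := exists 2%nat, false, (t+0+0); split; [|split; [simpl; rewrite Nat.sub_0_r, E; split; [discriminate|intros [_ X]; discriminate]|lia]];
      rewrite exec_cont with (c' := mkcfg Rej h 0 0 src1 cn1 None (t+0+0));
      [apply exec_stop; stp; reflexivity | stp; rewrite E; simpl; reflexivity].

Lemma phase2 : forall d h t, (d + S n = 2*h)%nat -> (h <= S n)%nat ->
  exists f b t', exec M lam A0 w f (mkcfg P2a h d 0 src1 cn1 None t) = Stop b t' /\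
   (b = true <-> (Nat.even d = true /\ tape_at w (h - Nat.div2 d) = Sym a)) /\ (t' <= t + 2*d + 2)%nat.
Proof.
  intro d; pattern d; apply lt_wf_ind; clear d; intros d IH h t Hd Hh.
  destruct d as [|[|d]].
  - destruct (tape_at w h) as [| |[|]] eqn:E;
    [ rej t h E | rej t h E | idtac | rej t h E ].
    exists 2%nat, true, (t+0+1). split; [|split; [simpl; rewrite Nat.sub_0_r, E; split; [intros _; split; reflexivity | reflexivity]|lia]].
    rewrite exec_cont with (c' := mkcfg Acc h 1 0 src1 cn1 None (t+0+1)).
    * apply exec_stop. stp. reflexivity.
    * stp. rewrite E. simpl. rewrite (proj2 (Nat.ltb_lt _ _)) by lia. reflexivity.
  - destruct h as [|h]; [lia|].
    exists 3%nat, false, (t+1+1+0+0). split; [|split; [simpl; split; [discriminate|intros [X _]; discriminate]|lia]].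
    rewrite exec_cont with (c' := mkcfg P2b h 0 0 src1 cn1 None (t+1+1)).
    rewrite exec_cont with (c' := mkcfg Rej h 0 0 src1 cn1 None (t+1+1+0+0)).
    * apply exec_stop. stp. reflexivity.
    * stp. reflexivity.
    * stp. reflexivity.
  - destruct h as [|h]; [lia|].
    destruct (IH d ltac:(lia) h (t+1+1+0+1) ltac:(lia) ltac:(lia)) as (f & b & t' & Hex & Hb & Ht).
    exists (S (S f)), b, t'. split; [|split; [simpl; exact Hb|lia]].
    rewrite exec_cont with (c' := mkcfg P2b h (S d) 0 src1 cn1 None (t+1+1)).
    rewrite exec_cont with (c' := mkcfg P2a h d 0 src1 cn1 None (t+1+1+0+1)).
    * exact Hex.
    * stp. reflexivity.
    * stp. reflexivity.
Qed.

Lemma Lc_iff : L_centre w <-> (Nat.even (S n) = true /\ tape_at w (S n - Nat.div2 (S n)) = Sym a).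
Proof.
  Transparent tape_at.
  split.
  - intros (w1 & w2 & -> & Hl).
    rewrite length_app. simpl length. rewrite <- Hl.
    replace (S (length w1 + S (length w1))) with (2 * S (length w1)) by lia.
    rewrite Nat.div2_double, Nat.even_mul. split; [reflexivity|].
    replace (2 * S (length w1) - S (length w1)) with (S (length w1)) by lia.
    simpl. rewrite nth_error_app2 by lia. rewrite Nat.sub_diag. reflexivity.
  - intros [He Ht]. apply Nat.even_spec in He. destruct He as [k Hk].
    destruct k as [|m]; [lia|].
    rewrite Hk, Nat.div2_double in Ht.
    replace (2 * S m - S m) with (S m) in Ht by lia. simpl in Ht.
    destruct (nth_error w m) as [x|] eqn:E; [|discriminate]. injection Ht as ->.
    destruct (nth_error_split w m E) as (l1 & l2 & Hw & Hl1).
    exists l1, l2. split; [exact Hw|].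
    assert (length w = length l1 + S (length l2)) by (rewrite Hw, length_app; reflexivity).
    lia.
Qed.
Opaque tape_at.

Lemma main_w : exists (fuel : nat) (b : bool) (t : nat),
      exec M lam A0 w fuel (init_cfg M) = Stop b t /\
      (b = true <-> L_centre w) /\ (t <= 10 * (length w + 1))%nat.
Proof.
  destruct (phase2 (S n) (S n) (0 + 0 + 1 + 1 + 2 * n) ltac:(lia) ltac:(lia)) as (f & b & t' & Hex & Hb & Ht).
  exists (2 + (S n + f))%nat, b, t'. split; [|split; [rewrite Lc_iff; exact Hb|lia]].
  unfold plus at 1.
  rewrite exec_cont with (c' := mkcfg Init2 0 0 0 src1 (fun _ => 0%nat) (Some (0%nat,true)) (0+0+0)).
  rewrite exec_cont with (c' := mkcfg P1 1 1 0 src1 cn1 None (0+0+0+1+1)).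
  - rewrite phase1 by lia. exact Hex.
  - stp. rewrite (proj2 (Nat.ltb_lt _ _)) by lia. rewrite (proj2 (Nat.ltb_lt _ _)) by lia. reflexivity.
  - stp. reflexivity.
Qed.
End Run.

Theorem theorem1 :
  forall lam A0 : R, (0 < lam)%R -> (0 < A0)%R ->
  exists M : OIA ab, recognizes_in_linear_time M lam A0 L_centre.
Proof.
  intros lam A0 _ _. exists M. exists 10%nat. intro w. apply main_w.
Qed.
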